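(* The expected number of C3's in the OSW graph $G_n$ that contain at least one long-range edge of type $w$ (that is, directed 3-cycles $(x,y,z)$, counted up to cyclic rotation, of pairwise distinct vertices whose three consecutive pairs are each of type $s$ or $w$ with at least one of type $w$) is $\mathcal{O}\left(n^2/\log n\right)$.
   Context: For an integer $n\ge1$, the $n$-octahedral graph $G'_n=(V,E')$ is the undirected graph with vertex set $V=\{u\in\mathbb{Z}^3:|u_1|+|u_2|+|u_3|=n\}$ and edge set $E'=\{\{v,w\}\subset V: v\neq w,\ |v_i-w_i|\le 1 \text{ for all } i=1,2,3\}$. For $u,v\in V$, $d_{uv}$ denotes the shortest-path distance in $G'_n$, and $Z_u=\left(\sum_{w\in V\setminus\{u\}} d_{uw}^{-2}\right)^{-1}$. The OSW random graph $G_n=(V,E)$ is the directed graph in which, for every $\{u,v\}\in E'$, both $(u,v),(v,u)\in E$, and in addition each vertex $u\in V$, independently of the others, chooses one vertex $v\in V\setminus\{u\}$ with probability $Z_u d_{uv}^{-2}$ and the long-range edge $(u,v)$ is added; $C_{uv}$ denotes the event that $u$ chooses $v$. For an ordered pair $(x,y)$ of distinct vertices, say $(x,y)$ is of type $s$ if $\{x,y\}\in E'$, and of type $w$ if $d_{xy}\ge2$ and $C_{xy}$ occurs. *)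

(* Defs.v *)
From Stdlib Require Import Reals ZArith.
From mathcomp Require Import all_boot.

Set Implicit Arguments.
Unset Strict Implicit.
Unset Printing Implicit Defensive.

(* Points are triples of indices in 'I_(2n+1); index i encodes coordinate i - n. *)
Definition pt (n : nat) := ('I_(2*n+1) * 'I_(2*n+1) * 'I_(2*n+1))%type.

Definition coord (n : nat) (i : 'I_(2*n+1)) : Z := (Z.of_nat i - Z.of_nat n)%Z.

Definition c1 n (p : pt n) : Z := coord p.1.1.
Definition c2 n (p : pt n) : Z := coord p.1.2.
Definition c3 n (p : pt n) : Z := coord p.2.

Definition onOct (n : nat) (p : pt n) : bool :=
  Z.eqb (Z.abs (c1 p) + Z.abs (c2 p) + Z.abs (c3 p))%Z (Z.of_nat n).

(* Vertex set V of G'_n (every u in Z^3 with |u|_1 = n has coords in [-n,n]). *)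
Definition V (n : nat) : finType := {p : pt n | onOct p}.

Definition adj (n : nat) (v w : V n) : bool :=
  [&& v != w,
      Z.leb (Z.abs (c1 (val v) - c1 (val w))) 1,
      Z.leb (Z.abs (c2 (val v) - c2 (val w))) 1 &
      Z.leb (Z.abs (c3 (val v) - c3 (val w))) 1].

Fixpoint ball (n : nat) (u : V n) (k : nat) : {set V n} :=
  match k with
  | 0 => [set u]
  | k'.+1 => ball u k' :|: [set w | [exists v in ball u k', adj v w]]
  end.

(* Shortest-path distance d_uv: least k with v in ball u k
   (G'_n is connected, so this is attained for k < #|V|). *)
Definition dist (n : nat) (u v : V n) : nat :=
  find (fun k => v \in ball u k) (iota 0 #|V n|).

Local Open Scope R_scope.

Definition Zn (n : nat) (u : V n) : R :=
  / (\big[Rplus/0]_(w : V n | w != u) (/ (INR (dist u w))^2)).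

Definition pchoose (n : nat) (u v : V n) : R :=
  if v == u then 0 else Zn u * / (INR (dist u v))^2.

(* A realization of the long-range choices is a function f : V -> V
   (f u = the vertex chosen by u); C_uv is the event f u = v.
   Choices are independent, so the probability of f is the product. *)
Definition probf (n : nat) (f : {ffun V n -> V n}) : R :=
  \big[Rmult/1]_(u : V n) pchoose u (f u).

Definition type_s (n : nat) (x y : V n) : bool := adj x y.
Definition type_w (n : nat) (f : {ffun V n -> V n}) (x y : V n) : bool :=
  leq 2 (dist x y) && (f x == y).

Definition C3w (n : nat) (f : {ffun V n -> V n}) (t : V n * V n * V n) : bool :=
  let: (x, y, z) := t in
  [&& x != y, y != z, z != x,
      type_s x y || type_w f x y,
      type_s y z || type_w f y z,
      type_s z x || type_w f z x &
      [|| type_w f x y, type_w f y z | type_w f z x]].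

(* number of such C3's counted up to cyclic rotation: each rotation class of a
   triple of pairwise distinct vertices has exactly 3 members *)
Definition numC3w (n : nat) (f : {ffun V n -> V n}) : R :=
  INR #|[set t | C3w f t]| / 3.

Definition expC3w (n : nat) : R :=
  \big[Rplus/0]_(f : {ffun V n -> V n}) (probf f * numC3w f).

(* Main.v *)
Require Import Defs.
From Stdlib Require Import Reals ZArith Lia.
From mathcomp Require Import all_boot all_order all_algebra.
From mathcomp Require Import Rstruct.
From mathcomp Require Import ring lra zify.
Set Implicit Arguments. Unset Strict Implicit. Unset Printing Implicit Defensive.
Import Order.TTheory GRing.Theory Num.Theory.
Local Open Scope ring_scope.

Section S.
Variable n : nat.
Implicit Types u v w : V n.

Lemma ball_sub u k : ball u k \subset ball u k.+1.
Proof. by rewrite /= subsetUl. Qed.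

Lemma ball_adj u k v w : v \in ball u k -> adj v w -> w \in ball u k.+1.
Proof. move=> hv hw; rewrite /= inE; apply/orP; right; rewrite inE; apply/existsP; exists v; by rewrite hv. Qed.

Lemma dist_le u w k : w \in ball u k -> (Defs.dist u w <= k)%N.
Proof.
move=> hw; rewrite /Defs.dist.
case: (ltnP k #|V n|) => hk.
  rewrite leqNgt; apply/negP => hlt.
  have := before_find 0%N hlt. by rewrite nth_iota // add0n hw.
apply: leq_trans (find_size _ _) _; by rewrite size_iota.
Qed.

Lemma dist_pos u w : w != u -> (0 < Defs.dist u w)%N.
Proof.
move=> hw; rewrite lt0n; apply/negP=> /eqP; rewrite /Defs.dist => h.
have hs : (0 < size (iota 0 #|V n|))%N by rewrite size_iota; apply/card_gt0P; exists u.
have hh : has (fun k => w \in ball u k) (iota 0 #|V n|) by rewrite (has_find (fun k => w \in ball u k)) h.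
have := nth_find 0%N hh.
rewrite h nth_iota ?add0n //=; last by rewrite size_iota in hs.
by rewrite inE (negbTE hw).
Qed.

Definition p u v := pchoose u v.
Definition Ssum u : R := \sum_(w | w != u) ((Defs.dist u w)%:R ^+ 2)^-1.

Lemma ZnE u : Zn u = (Ssum u)^-1.
Proof. rewrite /Zn /Ssum RinvE; congr (_^-1); apply: eq_bigr => w _; by rewrite RinvE INRE RpowE. Qed.

Lemma pE u v : p u v = if v == u then 0 else Zn u * ((Defs.dist u v)%:R ^+ 2)^-1.
Proof. by rewrite /p /pchoose INRE RpowE RinvE RmultE. Qed.

Lemma Ssum_ge0 u : 0 <= Ssum u.
Proof. apply: sumr_ge0 => w _; by rewrite invr_ge0 sqr_ge0. Qed.

Lemma Zn_ge0 u : 0 <= Zn u.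
Proof. by rewrite ZnE invr_ge0 Ssum_ge0. Qed.

Lemma p_ge0 u v : 0 <= p u v.
Proof. rewrite pE; case: eqP => _ //; apply: mulr_ge0; first exact: Zn_ge0. by rewrite invr_ge0 sqr_ge0. Qed.

Lemma p_le u v : p u v <= Zn u.
Proof.
rewrite pE; case: eqP => [_|/eqP hv]; first exact: Zn_ge0.
apply: ler_piMr; first exact: Zn_ge0.
have h1 : 1 <= (Defs.dist u v)%:R ^+ 2 :> R.
  by rewrite -natrX ler1n expn_gt0 dist_pos.
rewrite invf_le1 //; apply: lt_le_trans h1; exact: ltr01.
Qed.

Lemma sum_p u : \sum_v p u v <= 1.
Proof.
have -> : \sum_v p u v = Zn u * Ssum u.
  rewrite /Ssum mulr_sumr (bigID (fun v => v == u)) /= big1 ?add0r.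
    by apply: eq_bigr => v hv; rewrite pE (negbTE hv).
  by move=> v hv; rewrite pE hv.
rewrite ZnE; have [->|h] := eqVneq (Ssum u) 0; first by rewrite invr0 mul0r ler01.
by rewrite mulVf.
Qed.

Lemma probfE (f : {ffun V n -> V n}) : probf f = \prod_u p u (f u).
Proof. by []. Qed.

Lemma expect_prod (Sf : V n -> {set V n}) :
  \sum_(f : {ffun V n -> V n}) probf f * \prod_u ((f u \in Sf u)%:R : R)
  = \prod_u \sum_(v in Sf u) p u v.
Proof.
have -> : \prod_u \sum_(v in Sf u) p u v = \prod_u \sum_v (p u v * (v \in Sf u)%:R).
  apply: eq_bigr => u _; rewrite big_mkcond /=; apply: eq_bigr => v _.
  by case: (v \in Sf u); rewrite ?mulr1 ?mulr0.
rewrite bigA_distr_bigA /=; apply: eq_bigr => f _.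
by rewrite probfE -big_split.
Qed.

Definition a u v : R := (adj u v)%:R.

Definition A (f : {ffun V n -> V n}) x y z : R :=
  ([&& x != y, y != z & z != x] &&
   [&& f x == y, adj y z || (f y == z) & adj z x || (f z == x)])%:R.

Lemma sumP_le y z (b : bool) :
  \sum_(v in [set v | b || (v == z)]) p y v <= b%:R + p y z.
Proof.
case: b => /=.
  rewrite (eq_bigl (fun v => true)); last by move=> v; rewrite inE.
  apply: le_trans (sum_p y) _; have := p_ge0 y z; rewrite /=; lra.
rewrite add0r (eq_bigl (fun v => v == z)) ?big_pred1_eq // => v; by rewrite inE.
Qed.

Lemma sumP_ge0 u (T : {set V n}) : 0 <= \sum_(v in T) p u v.
Proof. apply: sumr_ge0 => v _; exact: p_ge0. Qed.

Lemma sumP_le1 u (T : {set V n}) : \sum_(v in T) p u v <= 1.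
Proof.
apply: le_trans (sum_p u); rewrite big_mkcond /=; apply: ler_sum => v _.
case: ifP => _ //; exact: p_ge0.
Qed.

Lemma aux3 (P1 P2 P3 r b c : R) : 0 <= P1 -> 0 <= P2 -> 0 <= P3 -> 0 <= r ->
  P2 <= b -> P3 <= c -> r <= 1 -> P1 * (P2 * (P3 * r)) <= P1 * b * c.
Proof.
move=> h1 h2 h3 h4 hb hc hr; rewrite -mulrA; apply: ler_wpM2l => //.
rewrite -[leRHS]mulr1 -mulrA; apply: ler_pM; rewrite ?mulr_ge0 //.
apply: ler_pM; rewrite ?mulr_ge0 //.
Qed.

Definition Sf3 x y z u : {set V n} :=
  if u == x then [set y] else if u == y then [set v | adj y z || (v == z)]
  else if u == z then [set v | adj z x || (v == x)] else [set: V n].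

Lemma prod3 x y z (F : V n -> R) : x != y -> y != z -> z != x ->
  \prod_u F u = F x * (F y * (F z * \prod_(u | (u != x) && (u != y) && (u != z)) F u)).
Proof.
move=> hxy hyz hzx.
rewrite (bigD1 x) // (bigD1 y) /=; last by rewrite eq_sym.
by rewrite (bigD1 z) /=; last by rewrite hzx eq_sym.
Qed.

Lemma natr_and3 (b1 b2 b3 : bool) : ([&& b1, b2 & b3]%:R : R) = b1%:R * (b2%:R * b3%:R).
Proof. by case: b1; case: b2; case: b3; rewrite ?mulr1 ?mulr0 ?mul0r. Qed.

Lemma A_prod x y z f : x != y -> y != z -> z != x ->
  A f x y z = \prod_u ((f u \in Sf3 x y z u)%:R : R).
Proof.
move=> hxy hyz hzx.
have e2 : (y == x) = false by rewrite eq_sym (negbTE hxy).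
have e3 : (z == x) = false by rewrite (negbTE hzx).
have e4 : (z == y) = false by rewrite eq_sym (negbTE hyz).
rewrite (prod3 _ hxy hyz hzx) big1; last first.
  move=> u /andP [/andP [hux huy] huz]; rewrite /Sf3 (negbTE hux) (negbTE huy) (negbTE huz).
  by rewrite inE.
rewrite /Sf3 !eqxx e2 e3 e4 !inE mulr1 /A hxy hyz hzx !andTb.
exact: natr_and3.
Qed.

Lemma expect_A x y z :
  \sum_(f : {ffun V n -> V n}) probf f * A f x y z
  <= p x y * (a y z + p y z) * (a z x + p z x).
Proof.
have hR : 0 <= p x y * (a y z + p y z) * (a z x + p z x).
  by rewrite !mulr_ge0 ?addr_ge0 ?p_ge0 ?ler0n.
case hd: [&& x != y, y != z & z != x]; last first.
  by rewrite big1 // => f _; rewrite /A hd /= mulr0.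
move/and3P: hd => [hxy hyz hzx].
have e2 : (y == x) = false by rewrite eq_sym (negbTE hxy).
have e3 : (z == x) = false by rewrite (negbTE hzx).
have e4 : (z == y) = false by rewrite eq_sym (negbTE hyz).
rewrite (eq_bigr (fun f => probf f * \prod_u ((f u \in Sf3 x y z u)%:R : R))); last first.
  by move=> f _; rewrite (A_prod _ hxy hyz hzx).
rewrite (expect_prod (Sf3 x y z)) (prod3 _ hxy hyz hzx).
have hrest : \prod_(i | (i != x) && (i != y) && (i != z)) \sum_(v in Sf3 x y z i) p i v <= 1.
  apply: prodr_ile1 => i _; rewrite sumP_ge0 /=.
  exact: sumP_le1.
have hrest0 : 0 <= \prod_(i | (i != x) && (i != y) && (i != z)) \sum_(v in Sf3 x y z i) p i v.
  apply: prodr_ge0 => i _; exact: sumP_ge0.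
have hx : \sum_(v in Sf3 x y z x) p x v = p x y by rewrite /Sf3 eqxx big_set1.
have hy : \sum_(v in Sf3 x y z y) p y v <= a y z + p y z by rewrite /Sf3 e2 eqxx; exact: sumP_le.
have hz : \sum_(v in Sf3 x y z z) p z v <= a z x + p z x by rewrite /Sf3 e3 e4 eqxx; exact: sumP_le.
rewrite hx.
exact: (aux3 (p_ge0 x y) (sumP_ge0 _ _) (sumP_ge0 _ _) hrest0 hy hz hrest).
Qed.

Definition Ab (f : {ffun V n -> V n}) x y z : bool :=
  [&& x != y, y != z & z != x] &&
   [&& f x == y, adj y z || (f y == z) & adj z x || (f z == x)].

Lemma C3w_imp f x y z : C3w f (x, y, z) -> [|| Ab f x y z, Ab f y z x | Ab f z x y].
Proof.
rewrite /C3w /Ab /type_s /type_w.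
move=> /andP [h1 /andP [h2 /andP [h3 /andP [h4 /andP [h5 /andP [h6 h7]]]]]].
have key : forall u w, adj u w || (1 < Defs.dist u w)%N && (f u == w) -> adj u w || (f u == w).
  by move=> u w /orP [->//|/andP [_ ->]]; rewrite orbT.
move: (key _ _ h4) (key _ _ h5) (key _ _ h6) => k4 k5 k6.
have h1' : y != x by rewrite eq_sym.
have h2' : z != y by rewrite eq_sym.
have h3' : x != z by rewrite eq_sym.
case/or3P: h7 => /andP [_ e]; apply/or3P.
- by apply: Or31; rewrite /Ab h1 h2 h3 e k5 k6.
- by apply: Or32; rewrite /Ab h1 h2 h3 e k4 k6.
- by apply: Or33; rewrite /Ab h1 h2 h3 e k4 k5.
Qed.

Lemma A_ge0 f x y z : 0 <= A f x y z.
Proof. exact: ler0n. Qed.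

Lemma C3w_le f x y z : ((C3w f (x, y, z))%:R : R) <= A f x y z + A f y z x + A f z x y.
Proof.
case h: (C3w f (x, y, z)); last by rewrite !addr_ge0 ?A_ge0.
move: (C3w_imp h); rewrite /A -/(Ab f x y z) -/(Ab f y z x) -/(Ab f z x y).
have g1 := A_ge0 f x y z; have g2 := A_ge0 f y z x; have g3 := A_ge0 f z x y.
rewrite /A in g1 g2 g3.
case/or3P => e; rewrite e in g1 g2 g3 *; lra.
Qed.

Lemma rot_sum (G : V n -> V n -> V n -> R) :
  \sum_x \sum_y \sum_z G y z x = \sum_x \sum_y \sum_z G x y z.
Proof.
rewrite exchange_big /=; apply: eq_bigr => y _; by rewrite exchange_big.
Qed.


Lemma sum_const_card (c : R) : \sum_(x : V n) c = c * #|V n|%:R.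
Proof. rewrite (eq_bigl (fun x => x \in [set: V n])); last by move=> x; rewrite inE.
by rewrite sumr_const cardsT mulr_natr. Qed.

Lemma sum3_le (F G : V n -> V n -> V n -> R) : (forall x y z, F x y z <= G x y z) ->
  \sum_x \sum_y \sum_z F x y z <= \sum_x \sum_y \sum_z G x y z.
Proof. move=> h; apply: ler_sum => x _; apply: ler_sum => y _; apply: ler_sum => z _; exact: h. Qed.

Lemma sum3D (F G : V n -> V n -> V n -> R) :
  \sum_x \sum_y \sum_z (F x y z + G x y z) = \sum_x \sum_y \sum_z F x y z + \sum_x \sum_y \sum_z G x y z.
Proof.
rewrite -big_split; apply: eq_bigr => x _; rewrite -big_split; apply: eq_bigr => y _.
by rewrite big_split.
Qed.

Lemma a_ge0 u v : 0 <= a u v. Proof. exact: ler0n. Qed.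

Ltac nn := repeat first [ done | exact: p_ge0 | exact: a_ge0 | exact: ler0n | apply: mulr_ge0 | apply: addr_ge0 | (apply: sumr_ge0 => ? _) ].

Lemma sum_b_le (Zm : R) : 0 <= Zm -> (forall u, Zn u <= Zm) -> (forall y, \sum_z a y z <= 27) ->
  \sum_x \sum_y \sum_z p x y * (a y z + p y z) * (a z x + p z x) <= 784 * Zm * #|V n|%:R.
Proof.
move=> Zm0 hZ hdeg.
have row1 y : \sum_z (a y z + p y z) <= 28.
  rewrite big_split; apply: le_trans (lerD (hdeg y) (sum_p y)) _; by rewrite natr1.
apply: le_trans (sum3_le (G := fun x y z => Zm * ((a y z + p y z) * a z x) + Zm * (p x y * (a y z + p y z))) _) _.
  move=> x y z; rewrite mulrDr; apply: lerD.
    rewrite mulrA; apply: ler_pM; nn.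
    apply: ler_pM; nn.
    exact: le_trans (p_le _ _) (hZ _).
  rewrite [Zm * _]mulrC; apply: ler_pM; nn.
  exact: le_trans (p_le _ _) (hZ _).
rewrite sum3D.
rewrite (rot_sum (fun x y z => Zm * ((a x y + p x y) * a y z))).
have S1 : \sum_x \sum_y \sum_z Zm * ((a x y + p x y) * a y z) <= Zm * 27 * 28 * #|V n|%:R.
  apply: le_trans (_ : \sum_x \sum_y Zm * 27 * (a x y + p x y) <= _).
    apply: ler_sum => x _; apply: ler_sum => y _.
    under eq_bigr do rewrite mulrA.
    rewrite -mulr_sumr mulrAC; apply: ler_pM; nn.
    apply: ler_pM; nn; exact: hdeg.
  apply: le_trans (_ : \sum_(x : V n) Zm * 27 * 28 <= _).
    apply: ler_sum => x _; rewrite -mulr_sumr; apply: ler_pM; nn; exact: row1.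
  by rewrite sum_const_card.
have S2 : \sum_x \sum_y \sum_z Zm * (p x y * (a y z + p y z)) <= Zm * 28 * #|V n|%:R.
  apply: le_trans (_ : \sum_x \sum_y Zm * 28 * p x y <= _).
    apply: ler_sum => x _; apply: ler_sum => y _.
    under eq_bigr do rewrite mulrA.
    rewrite -mulr_sumr [_ * 28 * _]mulrAC; apply: ler_pM; nn.
  apply: le_trans (_ : \sum_(x : V n) Zm * 28 <= _).
    apply: ler_sum => x _; rewrite -mulr_sumr; rewrite -[leRHS]mulr1; apply: ler_pM; nn; exact: sum_p.
  by rewrite sum_const_card.
apply: le_trans (lerD S1 S2) _; rewrite (_ : _ + _ = 784 * Zm * #|V n|%:R) ?lexx //; ring.
Qed.

Lemma sum_triple (F : V n * V n * V n -> R) :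
  \sum_t F t = \sum_x \sum_y \sum_z F (x, y, z).
Proof.
rewrite (pair_big _ _ (fun x y => \sum_z F (x, y, z))) /=.
rewrite (pair_big _ _ (fun xy z => F (xy.1, xy.2, z))) /=.
by apply: eq_bigr => [[[x y] z]] _.
Qed.

Lemma probf_ge0 (f : {ffun V n -> V n}) : 0 <= probf f.
Proof. rewrite probfE; apply: prodr_ge0 => u _; exact: p_ge0. Qed.

Definition bb x y z := p x y * (a y z + p y z) * (a z x + p z x).

Lemma card_sum (f : {ffun V n -> V n}) : (#|[set t | C3w f t]|%:R : R) = \sum_t ((C3w f t)%:R : R).
Proof.
rewrite -sum1_card natr_sum big_mkcond /=; apply: eq_bigr => t _.
by rewrite inE; case: (C3w f t).
Qed.

Lemma exp_main (Zm : R) : 0 <= Zm -> (forall u, Zn u <= Zm) -> (forall y, \sum_z a y z <= 27) ->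
  expC3w n <= 784 * Zm * #|V n|%:R.
Proof.
move=> Zm0 hZ hdeg.
have H : \sum_(f : {ffun V n -> V n}) probf f * \sum_t ((C3w f t)%:R : R)
         <= \sum_x \sum_y \sum_z (bb x y z + bb y z x + bb z x y).
  apply: le_trans (_ : \sum_(f : {ffun V n -> V n}) probf f *
      (\sum_x \sum_y \sum_z (A f x y z + A f y z x + A f z x y)) <= _).
    apply: ler_sum => f _; apply: ler_pM; [exact: probf_ge0 | by apply: sumr_ge0 => t _; exact: ler0n | by [] | ].
    rewrite sum_triple; apply: ler_sum => x _; apply: ler_sum => y _; apply: ler_sum => z _.
    exact: C3w_le.
  under eq_bigr do rewrite !mulr_sumr.
  rewrite [leLHS]exchange_big /=; apply: ler_sum => x _.
  under eq_bigr do rewrite mulr_sumr; rewrite [leLHS]exchange_big /=; apply: ler_sum => y _.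
  under eq_bigr do rewrite mulr_sumr; rewrite [leLHS]exchange_big /=; apply: ler_sum => z _.
  under eq_bigr do rewrite !mulrDr.
  rewrite !big_split; apply: lerD; first apply: lerD; exact: expect_A.
rewrite !sum3D (rot_sum (fun x y z => bb y z x)) !(rot_sum bb) in H.
have hb := sum_b_le Zm0 hZ hdeg.
rewrite -/(bb _ _ _) in hb.
have E : expC3w n = (\sum_(f : {ffun V n -> V n}) probf f * \sum_t ((C3w f t)%:R : R)) / 3%:R.
  rewrite /expC3w mulr_suml; apply: eq_bigr => f _.
  rewrite /numC3w RdivE RmultE INRE card_sum IZRposE INRE /= mulrA; by [].  
rewrite E ler_pdivrMr ?ltr0n //.
apply: le_trans H _.
set s := \sum_x \sum_y \sum_z bb x y z.
have : s <= 784 * Zm * #|V n|%:R by [].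
lra.
Qed.
End S.


Section G.
Variable n : nat.
Implicit Types u v w : V n.
Local Open Scope Z_scope.

Definition trip v : Z * Z * Z := (Defs.c1 (val v), Defs.c2 (val v), Defs.c3 (val v)).
Definition absum (T : Z * Z * Z) : Z := (Z.abs T.1.1 + Z.abs T.1.2 + Z.abs T.2)%Z.
Definition closeb (T T' : Z * Z * Z) : bool :=
  [&& Z.leb (Z.abs (T.1.1 - T'.1.1)) 1, Z.leb (Z.abs (T.1.2 - T'.1.2)) 1 &
      Z.leb (Z.abs (T.2 - T'.2)) 1].

Lemma coord_inj (i j : 'I_(2*n+1)%N) : Defs.coord i = Defs.coord j -> i = j.
Proof. rewrite /Defs.coord => h; apply: val_inj => /=; apply/eqP; rewrite -(eqn_add2r 0); apply/eqP; lia. Qed.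

Lemma trip_inj : injective trip.
Proof.
move=> [[[x1 x2] x3] hv] [[[y1 y2] y3] hw]; rewrite /trip /Defs.c1 /Defs.c2 /Defs.c3 /=.
case=> /coord_inj e1 /coord_inj e2 /coord_inj e3; subst; by apply: val_inj.
Qed.

Lemma trip_oct v : absum (trip v) = Z.of_nat n.
Proof. have := valP v; rewrite /onOct /absum /trip /= => /Z.eqb_eq; done. Qed.

Lemma adj_trip v w : adj v w = (v != w) && closeb (trip v) (trip w).
Proof. by []. Qed.

Lemma lt2n1 : (0 < 2 * n + 1)%N. Proof. by rewrite addn1. Qed.

Definition toI (z : Z) : 'I_(2*n+1)%N := Ordinal (ltn_pmod (Z.to_nat (z + Z.of_nat n)) lt2n1).

Lemma coord_toI z : (- Z.of_nat n <= z <= Z.of_nat n)%Z -> Defs.coord (toI z) = z.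
Proof.
move=> hz; rewrite /Defs.coord /toI /=.
rewrite modn_small; lia.
Qed.

Definition mkV (u : V n) (T : Z * Z * Z) : V n :=
  insubd u (toI T.1.1, toI T.1.2, toI T.2).

Lemma trip_mkV u T : absum T = Z.of_nat n -> trip (mkV u T) = T.
Proof.
case: T => [[x y] z]; rewrite /absum /= => h.
have hon : onOct (toI x, toI y, toI z).
  rewrite /onOct /Defs.c1 /Defs.c2 /Defs.c3 /= !coord_toI; try lia.
rewrite /trip /mkV /= insubdK //= /Defs.c1 /Defs.c2 /Defs.c3 /= !coord_toI //; lia.
Qed.

Lemma mkV_trip u v : mkV u (trip v) = v.
Proof. apply: trip_inj; rewrite trip_mkV //; exact: trip_oct. Qed.

Lemma adj_mkV u T T' : absum T = Z.of_nat n -> absum T' = Z.of_nat n -> T <> T' ->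
  closeb T T' -> adj (mkV u T) (mkV u T').
Proof.
move=> h h' hne hc; rewrite adj_trip !trip_mkV // hc andbT.
apply/eqP => e; apply: hne; by rewrite -(trip_mkV u h) -(trip_mkV u h') e.
Qed.

Definition gI (d : Z) : 'I_3 := Ordinal (ltn_pmod (Z.to_nat (d + 1)) (isT : (0 < 3)%N)).

Lemma gI_inj d d' : -1 <= d <= 1 -> -1 <= d' <= 1 -> gI d = gI d' -> d = d'.
Proof.
move=> h h' /(congr1 val) /=; rewrite !modn_small; lia.
Qed.

Lemma gI_modinj d d' : -1 <= d <= 1 -> -1 <= d' <= 1 ->
  Z.to_nat (d + 1) = Z.to_nat (d' + 1) %[mod 3] -> d = d'.
Proof. move=> h h'; rewrite !modn_small; lia. Qed.

Lemma closeb_range v w : closeb (trip v) (trip w) ->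
  [/\ -1 <= Defs.c1 (val w) - Defs.c1 (val v) <= 1, -1 <= Defs.c2 (val w) - Defs.c2 (val v) <= 1
    & -1 <= Defs.c3 (val w) - Defs.c3 (val v) <= 1].
Proof. rewrite /closeb /trip /= => /and3P [/Z.leb_le h1 /Z.leb_le h2 /Z.leb_le h3]; split; lia. Qed.

Lemma deg_le (y : V n) : (#|[set z | adj y z]| <= 27)%N.
Proof.
pose phi (z : V n) := (gI (Defs.c1 (val z) - Defs.c1 (val y)), gI (Defs.c2 (val z) - Defs.c2 (val y)),
               gI (Defs.c3 (val z) - Defs.c3 (val y))).
have hinj : {in [set z | adj y z] &, injective phi}.
  move=> z z'; rewrite !inE !adj_trip => /andP [_ /closeb_range [a1 a2 a3]]
     /andP [_ /closeb_range [b1 b2 b3]] [e1 e2 e3].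
  apply: trip_inj; rewrite /trip.
  move: (gI_modinj a1 b1 e1) (gI_modinj a2 b2 e2) (gI_modinj a3 b3 e3) => f1 f2 f3.
  congr (_, _, _); lia.
rewrite -(card_in_imset hinj).
apply: leq_trans (max_card _) _.
by rewrite !card_prod !card_ord.
Qed.

Lemma sign_abs_eq x y : (0 <=? x) = (0 <=? y) -> Z.abs x = Z.abs y -> x = y.
Proof.
case: (Z.leb_spec 0 x); case: (Z.leb_spec 0 y) => hy hx e; try discriminate e; lia.
Qed.

Lemma cardV_le : (#|V n| <= (2 * n + 1) * (2 * n + 1) * 2)%N.
Proof.
pose psi (v : V n) := ((val v).1.1, (val v).1.2, Z.leb 0 (Defs.c3 (val v))).
have hinj : injective psi.
  move=> v w [e1 e2 e3]; apply: trip_inj.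
  have ov := trip_oct v; have ow := trip_oct w; move: ov ow e3.
  rewrite /trip /absum /Defs.c1 /Defs.c2 /= e1 e2 => ov ow e3.
  congr (_, _, _).
  apply: (sign_abs_eq e3); lia.
apply: leq_trans (leq_card _ hinj) _.
by rewrite !card_prod !card_ord card_bool.
Qed.
End G.


Local Open Scope Z_scope.

Definition sgz (x : Z) : Z := if 0 <=? x then 1 else -1.

Lemma sgz_cases x : (0 <= x /\ sgz x = 1) \/ (x < 0 /\ sgz x = -1).
Proof. rewrite /sgz; case: (Z.leb_spec 0 x) => h; [left|right]; split => //. Qed.

Definition pathT (T : Z * Z * Z) (j s : nat) : Z * Z * Z :=
  (T.1.1 - sgz T.1.1 * Z.of_nat j,
   T.1.2 + sgz T.1.2 * Z.of_nat (minn j s),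
   T.2 + sgz T.2 * Z.of_nat (j - minn j s)).

Lemma absum_path T j s : Z.of_nat j <= Z.abs T.1.1 -> absum (pathT T j s) = absum T.
Proof.
case: T => [[a b] c] /= h; rewrite /absum /=.
case: (sgz_cases a) => [[ha ?]|[ha ?]];
case: (sgz_cases b) => [[hb ?]|[hb ?]];
case: (sgz_cases c) => [[hc ?]|[hc ?]]; lia.
Qed.

Lemma closeb_path T j s : closeb (pathT T j s) (pathT T j.+1 s).
Proof.
case: T => [[a b] c]; rewrite /closeb /=.
apply/and3P; split; apply/Z.leb_le;
case: (sgz_cases a) => [[ha ?]|[ha ?]];
case: (sgz_cases b) => [[hb ?]|[hb ?]];
case: (sgz_cases c) => [[hc ?]|[hc ?]]; lia.
Qed.

Lemma path_neq T j s : pathT T j s <> pathT T j.+1 s.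
Proof.
case: T => [[a b] c]; rewrite /pathT /= => -[e _ _].
case: (sgz_cases a) => [[ha e2]|[ha e2]]; rewrite e2 in e; lia.
Qed.

Lemma path0 T s : pathT T 0 s = T.
Proof. case: T => [[a b] c]; rewrite /pathT /=; by rewrite min0n /= !Z.mul_0_r Z.sub_0_r !Z.add_0_r. Qed.

Lemma path_inj T r s r' s' : (s <= r.+1)%N -> (s' <= r'.+1)%N ->
  pathT T r.+1 s = pathT T r'.+1 s' -> r = r' /\ s = s'.
Proof.
case: T => [[a b] c]; rewrite /pathT /= => hs hs' [e1 e2 e3].
case: (sgz_cases a) => [[ha e]|[ha e]]; rewrite e in e1;
case: (sgz_cases b) => [[hb f]|[hb f]]; rewrite f in e2; lia.
Qed.

Lemma path_neqT T r s : pathT T r.+1 s <> T.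
Proof.
case: T => [[a b] c]; rewrite /pathT /= => -[e _ _].
case: (sgz_cases a) => [[ha e2]|[ha e2]]; rewrite e2 in e; lia.
Qed.

Definition rotZ (T : Z * Z * Z) : Z * Z * Z := (T.1.2, T.2, T.1.1).

Lemma absum_rotn k T : absum (iter k rotZ T) = absum T.
Proof. elim: k T => [//|k IH] T; rewrite iterSr IH; case: T => [[a b] c]; rewrite /absum /=; lia. Qed.

Lemma closeb_rotn k T T' : closeb (iter k rotZ T) (iter k rotZ T') = closeb T T'.
Proof.
elim: k T T' => [//|k IH] T T'; rewrite !iterSr IH.
case: T => [[a b] c]; case: T' => [[a' b'] c']; rewrite /closeb /=.
by case: (Z.abs (b - b') <=? 1); case: (Z.abs (c - c') <=? 1); case: (Z.abs (a - a') <=? 1).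
Qed.

Lemma rotn_inj k : injective (iter k rotZ).
Proof.
elim: k => [//|k IH] T T'; rewrite !iterSr => /IH.
by case: T => [[a b] c]; case: T' => [[a' b'] c'] [-> -> ->].
Qed.

Lemma rot3 k T : (k <= 3)%N -> iter (3 - k) rotZ (iter k rotZ T) = T.
Proof.
move=> hk; rewrite -iterD subnK //.
by case: T => [[a b] c].
Qed.

Close Scope Z_scope.
Local Open Scope ring_scope.

Section Fam.
Variable n : nat.
Variables (u : V n) (k : nat).
Hypothesis hk : (k <= 3)%N.

Definition Tk := iter k rotZ (trip u).
Definition Bk := iter (3 - k) rotZ.
Definition mm := Z.to_nat (Z.abs Tk.1.1).
Definition fam (j s : nat) : V n := mkV u (Bk (pathT Tk j s)).

Lemma absum_fam j s : (j <= mm)%N -> absum (Bk (pathT Tk j s)) = Z.of_nat n.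
Proof.
move=> hj; rewrite /Bk absum_rotn absum_path; last by rewrite /mm in hj; lia.
by rewrite /Tk absum_rotn trip_oct.
Qed.

Lemma BkTk : Bk Tk = trip u.
Proof. exact: rot3. Qed.

Lemma fam_ball j s : (j <= mm)%N -> fam j s \in ball u j.
Proof.
elim: j => [_|j IH hj].
  by rewrite /fam path0 BkTk mkV_trip /= inE.
apply: ball_adj (IH (ltnW hj)) _.
apply: adj_mkV.
- exact: absum_fam (ltnW hj).
- exact: absum_fam hj.
- move/rotn_inj; exact: path_neq.
- by rewrite /Bk closeb_rotn closeb_path.
Qed.

Lemma fam_dist r s : (r < mm)%N -> (Defs.dist u (fam r.+1 s) <= r.+1)%N.
Proof. move=> h; apply: dist_le; exact: fam_ball. Qed.

Lemma trip_fam j s : (j <= mm)%N -> trip (fam j s) = Bk (pathT Tk j s).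
Proof. move=> h; rewrite /fam trip_mkV //; exact: absum_fam. Qed.

Lemma fam_neq r s : (r < mm)%N -> fam r.+1 s != u.
Proof.
move=> h; apply/eqP => e.
have := trip_fam s h; rewrite e -BkTk => /rotn_inj /esym.
exact: path_neqT.
Qed.

Lemma fam_inj r s r' s' : (r < mm)%N -> (r' < mm)%N -> (s <= r.+1)%N -> (s' <= r'.+1)%N ->
  fam r.+1 s = fam r'.+1 s' -> r = r' /\ s = s'.
Proof.
move=> h h' hs hs' e.
have := trip_fam s h; rewrite e trip_fam // => /rotn_inj /esym e2.
exact: path_inj e2.
Qed.
End Fam.

Lemma sum_ord_const (K : nat) (c : R) : \sum_(i < K) c = c *+ K.
Proof.
rewrite (eq_bigl (fun i => i \in [set: 'I_K])); last by move=> i; rewrite inE.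
by rewrite sumr_const cardsT card_ord.
Qed.

Lemma harm_term (r : nat) : ((r.+1)%:R)^-1 <= (((r.+1)%:R ^+ 2)^-1 *+ r.+2 : R).
Proof.
set x : R := (r.+1)%:R.
have hx : 0 < x by rewrite ltr0n.
rewrite (_ : x^-1 = x * (x ^+ 2)^-1); last first.
  by rewrite expr2 invfM mulrA divff ?mul1r // gt_eqF.
rewrite -mulr_natr mulrC; apply: ler_pM.
- by rewrite invr_ge0 exprn_ge0 // ltW.
- exact: ltW.
- by [].
- by rewrite /x ler_nat.
Qed.

Section Sum.
Variable n : nat.
Variables (u : V n) (k : nat).
Hypothesis hk : (k <= 3)%N.

Lemma Ssum_ge : \sum_(r < mm u k) ((r.+1)%:R)^-1 <= Ssum u.
Proof.
set m := mm u k.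
pose D := [set rs : 'I_m * 'I_m.+1 | (rs.2 < rs.1.+2)%N].
pose phi (rs : 'I_m * 'I_m.+1) := fam u k rs.1.+1 rs.2.
pose g (w : V n) : R := ((Defs.dist u w)%:R ^+ 2)^-1.
have injD : {in D &, injective phi}.
  move=> [r s] [r' s']; rewrite !inE /= => hs hs' e.
  have [e1 e2] := fam_inj hk (ltn_ord r) (ltn_ord r') hs hs' e.
  by congr (_, _); apply: val_inj.
have S1 : \sum_(rs in D) g (phi rs) <= Ssum u.
  rewrite -(big_imset g injD) /Ssum -/g.
  rewrite [leRHS](bigID (fun w => w \in phi @: D)) /=.
  have -> : \sum_(w | (w != u) && (w \in phi @: D)) g w = \sum_(w in phi @: D) g w.
    apply: eq_bigl => w; case: (boolP (w \in phi @: D)) => h; rewrite ?andbT ?andbF //.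
    case/imsetP: h => rs _ ->; rewrite /phi; apply: (fam_neq hk _ (ltn_ord rs.1)).
  rewrite lerDl; apply: sumr_ge0 => w _; by rewrite invr_ge0 sqr_ge0.
have S2 : \sum_(rs in D) (((rs.1 : nat).+1)%:R ^+ 2)^-1 <= \sum_(rs in D) g (phi rs).
  apply: ler_sum => -[r s] _; rewrite /g /phi /=.
  have hd := fam_dist hk s (ltn_ord r).
  have hd0 : (0 < Defs.dist u (fam u k r.+1 s))%N by apply: dist_pos; exact: (fam_neq hk s (ltn_ord r)).
  rewrite lef_pV2 ?posrE ?exprn_gt0 ?ltr0n // -!natrX ler_nat leq_exp2r //.
have S3 : \sum_(rs in D) (((rs.1 : nat).+1)%:R ^+ 2)^-1 =
          \sum_(r < m) (((r : nat).+1)%:R ^+ 2)^-1 *+ (r : nat).+2 :> R.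
  rewrite (eq_bigl (fun rs : 'I_m * 'I_m.+1 => true && (rs.2 < rs.1.+2)%N)); last first.
    by move=> rs; rewrite inE.
  rewrite -(pair_big_dep xpredT (fun (r : 'I_m) (s : 'I_m.+1) => (s < r.+2)%N)
             (fun (r : 'I_m) (s : 'I_m.+1) => (((r : nat).+1)%:R ^+ 2)^-1)) /=.
  apply: eq_bigr => r _.
  rewrite -(big_ord_widen _ (fun _ => (((r : nat).+1)%:R ^+ 2)^-1)) ?ltnS ?ltn_ord //.
  by rewrite sum_ord_const.
apply: le_trans S1; apply: le_trans S2; rewrite S3.
apply: ler_sum => r _; exact: harm_term.
Qed.
End Sum.

Local Open Scope ring_scope.

Lemma ln_le (x y : R) : 0 < x -> x <= y -> ln x <= ln y.
Proof.
move=> hx hxy; have [->|hlt] := eqVneq x y; first exact: lexx.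
have h : x < y by rewrite lt_neqAle hlt hxy.
apply/RleP; apply: Rlt_le; apply: ln_increasing; exact/RltP.
Qed.

Lemma ln1x (x : R) : 0 <= x -> ln (1 + x) <= x.
Proof.
move=> hx.
have h1 : 0 < 1 + x by lra.
have h2 : 1 + x <= exp x by apply/RleP; exact: exp_ineq1_le.
by have := ln_le h1 h2; rewrite ln_exp.
Qed.

Lemma harmonic (m : nat) : ln ((m.+1)%:R) <= \sum_(r < m) ((r.+1)%:R)^-1.
Proof.
elim: m => [|m IH].
  by rewrite big_ord0 ln_1.
rewrite big_ord_recr /=.
set x : R := (m.+1)%:R.
have hx : 0 < x by rewrite ltr0n.
have e : (m.+2)%:R = x * (1 + x^-1).
  by rewrite mulrDr mulr1 divff ?gt_eqF // /x -natr1.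
rewrite e -RmultE ln_mult; last first.
  by apply/RltP; rewrite addr_gt0 ?invr_gt0.
  by apply/RltP.
rewrite RplusE; apply: lerD => //.
by apply: ln1x; rewrite invr_ge0 ltW.
Qed.

Lemma exists_k n (u : V n) : exists2 k, (k <= 3)%N & (n <= 3 * mm u k)%N.
Proof.
have h := trip_oct u.
rewrite /mm /Tk.
move: h; case: (trip u) => [[a b] c]; rewrite /absum /= => h.
have [ha|ha] := boolP (n <= 3 * Z.to_nat (Z.abs a))%N; first by exists 0%N.
have [hb|hb] := boolP (n <= 3 * Z.to_nat (Z.abs b))%N; first by exists 1%N.
exists 2%N => //=; lia.
Qed.

Lemma Zn_bound n (u : V n) : (9 <= n)%N -> Zn u <= 2 / ln (n%:R).
Proof.
move=> hn.
have [k hk hm] := exists_k u.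
set m := mm u k in hm.
have hS : ln ((m.+1)%:R) <= Ssum u := le_trans (harmonic m) (Ssum_ge u hk).
have p3 : (0 : R) < 3%:R by rewrite ltr0n.
have pm : (0 : R) < (m.+1)%:R by rewrite ltr0n.
have e1 : ln (n%:R) <= ln 3%:R + ln (m.+1)%:R.
  rewrite -RplusE -ln_mult; [|exact/RltP|exact/RltP].
  apply: ln_le; first by rewrite ltr0n; lia.
  by rewrite RmultE -natrM ler_nat; lia.
have e2 : ln 3%:R + ln 3%:R <= ln (n%:R).
  rewrite -RplusE -ln_mult; [|exact/RltP|exact/RltP].
  apply: ln_le; first by rewrite RmultE mulr_gt0.
  by rewrite RmultE -natrM ler_nat.
have e3 : 0 < ln (3%:R : R).
  have h : Rlt (ln 1) (ln (3%:R : R)).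
    by apply: ln_increasing; apply/RltP; rewrite ?ltr01 ?ltr1n.
  rewrite ln_1 in h; exact/RltP.
set L := ln (n%:R) in e1 e2 *.
have hL : 0 < L by lra.
have hS2 : L / 2 <= Ssum u by lra.
rewrite ZnE -invf_div lef_pV2 ?posrE //; [lra | lra].
Qed.

Local Open Scope ring_scope.

Lemma deg_sum n (y : V n) : \sum_z a y z <= 27.
Proof.
have -> : \sum_z a y z = (#|[set z | adj y z]|%:R : R).
  rewrite -sum1_card natr_sum [RHS]big_mkcond /=; apply: eq_bigr => z _.
  by rewrite inE /a; case: (adj y z).
by rewrite ler_nat deg_le.
Qed.

Theorem theorem4 :
  exists (C : R) (N : nat), Rlt 0 C /\
    forall n : nat, leq N n ->
      Rle (expC3w n) (Rmult C (Rdiv (pow (INR n) 2) (ln (INR n)))).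
Proof.
exists (28224%:R : R), 9%N; split; first by apply/RltP; rewrite ltr0n.
move=> n hn; apply/RleP; rewrite RmultE RdivE RpowE INRE.
set L := ln (n%:R).
have e3 : 0 < ln (3%:R : R).
  have h : Rlt (ln 1) (ln (3%:R : R)).
    by apply: ln_increasing; apply/RltP; rewrite ?ltr01 ?ltr1n.
  rewrite ln_1 in h; exact/RltP.
have hL : 0 < L.
  apply: lt_le_trans e3 _; apply: ln_le; rewrite ?ltr0n // ler_nat; lia.
set Zm := 2 / L.
have Zm0 : 0 <= Zm by rewrite /Zm divr_ge0 // ltW.
have hZ : forall u : V n, Zn u <= Zm by move=> u; exact: Zn_bound.
have hE := exp_main Zm0 hZ (@deg_sum n).
have hV : (#|V n|%:R : R) <= 18 * n%:R ^+ 2.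
  have h := cardV_le n.
  rewrite -natrX -natrM ler_nat; apply: leq_trans h _; nia.
apply: le_trans hE _.
apply: le_trans (_ : 784 * Zm * (18 * n%:R ^+ 2) <= _).
  apply: ler_wpM2l hV; by rewrite mulr_ge0.
rewrite /Zm le_eqVlt; apply/orP; left; apply/eqP; field; by rewrite gt_eqF.
Qed.
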